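(* The number of pairwise nonequivalent regular graphical Hadamard matrices of order $4^m$ is unbounded as $m\to\infty$.
   Context: A Hadamard matrix of order $n$ is an $n\times n$ matrix $H$ with entries $\pm1$ such that $HH^{\top}=nI$. It is graphical if it is symmetric with constant diagonal, and regular if all its row sums and column sums are equal. Two Hadamard matrices are equivalent if one can be obtained from the other by permuting rows, permuting columns, and multiplying rows and columns by $-1$. *)

(* Defs.v *)
From HB Require Import structures.
From mathcomp Require Import all_boot all_order all_algebra all_fingroup.
Set Implicit Arguments. Unset Strict Implicit. Unset Printing Implicit Defensive.
Import GRing.Theory Num.Theory.
Local Open Scope ring_scope.

Definition hadamard (n : nat) (H : 'M[int]_n) : Prop :=
  (forall i j, H i j = 1 \/ H i j = -1) /\ H *m H^T = (n%:R)%:M.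

Definition graphical (n : nat) (H : 'M[int]_n) : Prop :=
  H^T = H /\ (forall i j : 'I_n, H i i = H j j).

Definition regular (n : nat) (H : 'M[int]_n) : Prop :=
  exists c : int,
    (forall i, \sum_(j < n) H i j = c) /\ (forall j, \sum_(i < n) H i j = c).

Definition hadamard_equiv (n : nat) (H H' : 'M[int]_n) : Prop :=
  exists (s t : 'S_n) (a b : 'I_n -> bool),
    forall i j, H' i j = (-1) ^+ a i * (-1) ^+ b j * H (s i) (t j).

(* Main.v *)
Require Import Defs.
From HB Require Import structures.
From mathcomp Require Import all_boot all_order all_algebra all_fingroup.
From mathcomp Require Import ring lra zify.
Set Implicit Arguments. Unset Strict Implicit. Unset Printing Implicit Defensive.
Import GRing.Theory Num.Theory.
Local Open Scope ring_scope.

Lemma sum_split r n (F : nat -> int) :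
  \sum_(0 <= c < r * n) F c = \sum_(0 <= y < n) \sum_(0 <= x < r) F (x + r * y)%N.
Proof.
elim: n => [|n IH]; first by rewrite muln0 !big_geq.
rewrite big_nat_recr //= -IH mulnS addnC (big_cat_nat _ (leq_addr r (r * n))) //=.
congr (_ + _).
rewrite -{1}[(r * n)%N]add0n big_addn addKn.
by apply: eq_bigr.
Qed.

Lemma sum_prod r n (phi psi : nat -> int) : (0 < r)%N ->
  \sum_(0 <= c < r * n) phi (c %% r)%N * psi (c %/ r)%N =
  (\sum_(0 <= x < r) phi x) * (\sum_(0 <= y < n) psi y).
Proof.
move=> r0; rewrite sum_split.
transitivity (\sum_(0 <= y < n) \sum_(0 <= x < r) phi x * psi y).
  apply: eq_bigr => y _; rewrite big_nat_cond [RHS]big_nat_cond.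
  apply: eq_bigr => x /andP[/andP[_ xr] _].
  by rewrite addnC mulnC modnMDl divnMDl // modn_small // divn_small // addn0.
rewrite mulr_suml exchange_big /=.
by apply: eq_bigr => x _; rewrite mulr_sumr.
Qed.

Lemma sum_prod4 r n (f g : nat -> nat -> nat -> nat -> int) : (0 < r)%N ->
  \sum_(0 <= i < r * n) \sum_(0 <= j < r * n) \sum_(0 <= k < r * n) \sum_(0 <= l < r * n)
    f (i %% r)%N (j %% r)%N (k %% r)%N (l %% r)%N * g (i %/ r)%N (j %/ r)%N (k %/ r)%N (l %/ r)%N =
  (\sum_(0 <= i < r) \sum_(0 <= j < r) \sum_(0 <= k < r) \sum_(0 <= l < r) f i j k l) *
  (\sum_(0 <= i < n) \sum_(0 <= j < n) \sum_(0 <= k < n) \sum_(0 <= l < n) g i j k l).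
Proof.
move=> r0.
under eq_bigr => i _ do under eq_bigr => j _ do under eq_bigr => k _ do
  rewrite (sum_prod n (f (i %% r)%N (j %% r)%N (k %% r)%N) (g (i %/ r)%N (j %/ r)%N (k %/ r)%N) r0).
under eq_bigr => i _ do under eq_bigr => j _ do
  rewrite (sum_prod n (fun z => \sum_(0 <= x < r) f (i %% r)%N (j %% r)%N z x)
                      (fun z => \sum_(0 <= x < n) g (i %/ r)%N (j %/ r)%N z x) r0).
under eq_bigr => i _ do
  rewrite (sum_prod n (fun z => \sum_(0 <= y < r) \sum_(0 <= x < r) f (i %% r)%N z y x)
                      (fun z => \sum_(0 <= y < n) \sum_(0 <= x < n) g (i %/ r)%N z y x) r0).
exact: (sum_prod n (fun z => \sum_(0 <= w < r) \sum_(0 <= y < r) \sum_(0 <= x < r) f z w y x)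
                      (fun z => \sum_(0 <= w < n) \sum_(0 <= y < n) \sum_(0 <= x < n) g z w y x) r0).
Qed.

Definition base := (nat * (nat -> nat -> int))%type.
Fixpoint ordl (l : seq base) : nat := if l is b :: l' then (b.1 * ordl l')%N else 1%N.
Fixpoint Kr (l : seq base) (i c : nat) : int :=
  if l is b :: l' then b.2 (i %% b.1)%N (c %% b.1)%N * Kr l' (i %/ b.1)%N (c %/ b.1)%N else 1.

Definition P4 (G : nat -> nat -> int) i j k l c := G i c * G j c * G k c * G l c.
Definition cstN n G i j k l : bool :=
  [forall c : 'I_n, forall c' : 'I_n, P4 G i j k l c == P4 G i j k l c'].
Definition cntN n G : int :=
  \sum_(0 <= i < n) \sum_(0 <= j < n) \sum_(0 <= k < n) \sum_(0 <= l < n) (cstN n G i j k l)%:R.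

Definition pm1 (x : int) := x = 1 \/ x = -1.

Record good (b : base) : Prop := Good {
  g_pos : (0 < b.1)%N;
  g_pm : forall x y, pm1 (b.2 x y);
  g_sym : forall x y, (x < b.1)%N -> (y < b.1)%N -> b.2 x y = b.2 y x;
  g_diag : forall x, (x < b.1)%N -> b.2 x x = b.2 0%N 0%N;
  g_row : forall x, (x < b.1)%N -> \sum_(0 <= y < b.1) b.2 x y = \sum_(0 <= y < b.1) b.2 0%N y;
  g_orth : forall x x', (x < b.1)%N -> (x' < b.1)%N ->
     \sum_(0 <= y < b.1) b.2 x y * b.2 x' y = (b.1 * (x == x'))%:R
}.

Lemma pm1M x y : pm1 x -> pm1 y -> pm1 (x * y).
Proof. by case=> ->; case=> ->; rewrite /pm1; rewrite ?mulN1r ?mul1r ?opprK; auto. Qed.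

Lemma pm1_neq0 x : pm1 x -> x != 0.
Proof. by case=> ->. Qed.

Fixpoint allg (l : seq base) : Prop := if l is b :: l' then good b /\ allg l' else True.

Lemma ordl_pos l : allg l -> (0 < ordl l)%N.
Proof. elim: l => //= b l IH [gb gl]; by rewrite muln_gt0 (g_pos gb) IH. Qed.

Lemma Kr_pm l i c : allg l -> pm1 (Kr l i c).
Proof.
elim: l i c => [|b l IH] i c /=; first by left.
by case=> gb gl; apply: pm1M; [apply: g_pm | apply: IH].
Qed.

Lemma Kr_sym l i c : allg l -> Kr l i c = Kr l c i.
Proof.
elim: l i c => [|b l IH] i c //= [gb gl].
by rewrite (g_sym gb) ?ltn_pmod ?(g_pos gb) // IH.
Qed.

Lemma Kr_diag l i : allg l -> Kr l i i = Kr l 0%N 0%N.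
Proof.
elim: l i => [|b l IH] i //= [gb gl].
by rewrite (g_diag gb) ?ltn_pmod ?(g_pos gb) // IH // mod0n div0n.
Qed.

Lemma Kr_row l i : allg l ->
  \sum_(0 <= c < ordl l) Kr l i c = \sum_(0 <= c < ordl l) Kr l 0%N c.
Proof.
elim: l i => [|b l IH] i //= [gb gl].
rewrite !sum_prod ?(g_pos gb) // (g_row gb) ?ltn_pmod ?(g_pos gb) // IH //.
by rewrite mod0n div0n.
Qed.

Lemma eq_divmod r i i' : (i == i') = (i %% r == i' %% r)%N && (i %/ r == i' %/ r)%N.
Proof.
apply/eqP/andP => [-> //|[/eqP e1 /eqP e2]].
by rewrite (divn_eq i r) (divn_eq i' r) e1 e2.
Qed.

Lemma Kr_orth l i i' : allg l -> (i < ordl l)%N -> (i' < ordl l)%N ->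
  \sum_(0 <= c < ordl l) Kr l i c * Kr l i' c = (ordl l * (i == i'))%:R.
Proof.
elim: l i i' => [|b l IH] i i' /=.
  by move=> _; rewrite !ltnS !leqn0 => /eqP-> /eqP->; rewrite big_nat1 mulr1.
case=> gb gl hi hi'; have r0 := g_pos gb.
under eq_bigr => c _ do rewrite mulrACA.
rewrite (sum_prod (ordl l) (fun z => b.2 (i %% b.1)%N z * b.2 (i' %% b.1)%N z)
                 (fun z => Kr l (i %/ b.1)%N z * Kr l (i' %/ b.1)%N z) r0).
rewrite (g_orth gb) ?ltn_pmod // IH ?ltn_divLR // 1?mulnC //.
rewrite -natrM (eq_divmod b.1 i i'); congr (_ %:R).
by case: (i == i' %[mod b.1]); case: (_ %/ _ == _)%N;
  rewrite ?muln0 ?mul0n ?muln1 ?mul1n // mulnC.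
Qed.

Lemma cst_split r n (p q : nat -> int) : (0 < r)%N -> (0 < n)%N ->
  (forall x, p x != 0) -> (forall y, q y != 0) ->
  [forall c : 'I_(r * n), forall c' : 'I_(r * n),
     p (c %% r)%N * q (c %/ r)%N == p (c' %% r)%N * q (c' %/ r)%N] =
  [forall x : 'I_r, forall x' : 'I_r, p x == p x'] &&
  [forall y : 'I_n, forall y' : 'I_n, q y == q y'].
Proof.
move=> r0 n0 hp hq; apply/idP/idP.
  move/forallP=> H; apply/andP; split; apply/forallP => x; apply/forallP => x'.
    have cx (z : 'I_r) : (z < r * n)%N by apply: leq_trans (ltn_ord z) (leq_pmulr _ n0).
    have := forallP (H (Ordinal (cx x))) (Ordinal (cx x')).
    rewrite /= !modn_small // !divn_small // => /eqP E.
    by apply/eqP; apply: (mulIf (hq 0%N)).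
  have cy (z : 'I_n) : (r * z < r * n)%N by rewrite ltn_pmul2l.
  have := forallP (H (Ordinal (cy x))) (Ordinal (cy x')).
  rewrite /= !modnMr !mulKn // => /eqP E.
  by apply/eqP; apply: (mulfI (hp 0%N)).
move/andP => [/forallP A /forallP B]; apply/forallP => c; apply/forallP => c'.
have cd (z : 'I_(r * n)) : (z %/ r < n)%N by rewrite ltn_divLR // [(n * r)%N]mulnC.
have /eqP -> := forallP (A (Ordinal (ltn_pmod c r0))) (Ordinal (ltn_pmod c' r0)).
by have /eqP -> := forallP (B (Ordinal (cd c))) (Ordinal (cd c')).
Qed.

Lemma P4_pm G i j k l c : (forall x y, pm1 (G x y)) -> P4 G i j k l c != 0.
Proof. by move=> h; apply: pm1_neq0; rewrite /P4; do ! apply: pm1M. Qed.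

Lemma cstN_step b l i j k l' : good b -> allg l ->
  cstN (b.1 * ordl l) (Kr (b :: l)) i j k l' =
  cstN b.1 b.2 (i %% b.1) (j %% b.1) (k %% b.1) (l' %% b.1) &&
  cstN (ordl l) (Kr l) (i %/ b.1) (j %/ b.1) (k %/ b.1) (l' %/ b.1).
Proof.
move=> gb gl; rewrite /cstN -(cst_split (g_pos gb) (ordl_pos gl)); last 2 first.
- by move=> x; apply: P4_pm; apply: g_pm.
- by move=> x; apply: P4_pm => ? ?; apply: Kr_pm.
apply: eq_forallb => c; apply: eq_forallb => c'.
by rewrite /P4 /=; congr (_ == _); ring.
Qed.

Lemma Kr_cnt l : allg l -> cntN (ordl l) (Kr l) = \prod_(b <- l) cntN b.1 b.2.
Proof.
elim: l => [|b l IH] /=.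
  move=> _; rewrite big_nil /cntN !big_nat1.
  by apply/eqP; rewrite pnatr_eq1 eqb1; apply/forallP => c; apply/forallP => c'; rewrite /P4 /=.
case=> gb gl; rewrite big_cons -IH // /cntN.
under eq_bigr => i _ do under eq_bigr => j _ do under eq_bigr => k _ do under eq_bigr => l' _ do
  rewrite cstN_step // -mulnb natrM.
exact: (sum_prod4 (ordl l) (fun i j k l' => (cstN b.1 b.2 i j k l')%:R)
   (fun i j k l' => (cstN (ordl l) (Kr l) i j k l')%:R) (g_pos gb)).
Qed.

Definition cstM n (H : 'M[int]_n) (i j k l : 'I_n) : bool :=
  [forall c : 'I_n, forall c' : 'I_n,
     H i c * H j c * H k c * H l c == H i c' * H j c' * H k c' * H l c'].
Definition cntM n (H : 'M[int]_n) : int :=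
  \sum_(i < n) \sum_(j < n) \sum_(k < n) \sum_(l < n) (cstM H i j k l)%:R.

Lemma forall_perm n (t : 'S_n) (F : 'I_n -> bool) : [forall c, F (t c)] = [forall c, F c].
Proof.
apply/forallP/forallP => h x; last exact: h.
by have := h (t^-1 x)%g; rewrite permKV.
Qed.

Lemma sign4 (b : bool) : ((-1) ^+ b) ^+ 4 = 1 :> int.
Proof. by case: b; [rewrite expr1 -signr_odd | rewrite expr0 expr1n]. Qed.

Lemma cntM_equiv n (H H' : 'M[int]_n) : hadamard_equiv H H' -> cntM H = cntM H'.
Proof.
case=> s [t [a [b E]]].
have cE i j k l : cstM H' i j k l = cstM H (s i) (s j) (s k) (s l).
  set sg := (-1) ^+ a i * (-1) ^+ a j * (-1) ^+ a k * (-1) ^+ a l : int.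
  have sg0 : sg != 0 by rewrite /sg !mulf_neq0 // signr_eq0.
  have PE c : H' i c * H' j c * H' k c * H' l c =
     sg * (H (s i) (t c) * H (s j) (t c) * H (s k) (t c) * H (s l) (t c)).
    rewrite !E; set x := (-1) ^+ b c.
    transitivity (x ^+ 4 * (sg * (H (s i) (t c) * H (s j) (t c) * H (s k) (t c) * H (s l) (t c)))).
      by rewrite /sg; ring.
    by rewrite sign4 mul1r.
  rewrite /cstM.
  under eq_forallb => c do under eq_forallb => c' do rewrite !PE (inj_eq (mulfI sg0)).
  rewrite -[RHS](forall_perm t); apply: eq_forallb => c.
  exact: (forall_perm t (fun c' => _ == _)).
rewrite /cntM (reindex_inj (@perm_inj _ s)).
apply: eq_bigr => i _; rewrite (reindex_inj (@perm_inj _ s)).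
apply: eq_bigr => j _; rewrite (reindex_inj (@perm_inj _ s)).
apply: eq_bigr => k _; rewrite (reindex_inj (@perm_inj _ s)).
by apply: eq_bigr => l _; rewrite cE.
Qed.

Lemma cntM_mx n (G : nat -> nat -> int) :
  cntM (\matrix_(i < n, c < n) G i c) = cntN n G.
Proof.
rewrite /cntM /cntN big_mkord; apply: eq_bigr => i _.
rewrite big_mkord; apply: eq_bigr => j _.
rewrite big_mkord; apply: eq_bigr => k _.
rewrite big_mkord; apply: eq_bigr => l _.
congr (_ %:R); rewrite /cstN /cstM /P4.
by under eq_forallb => c do under eq_forallb => c' do rewrite !mxE.
Qed.

Lemma sum_pos n (F : nat -> int) w : (forall i, (i < n)%N -> 0 <= F i) -> (w < n)%N ->
  0 < F w -> 0 < \sum_(0 <= i < n) F i.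
Proof.
move=> h wn Fw; rewrite big_mkord (bigD1 (Ordinal wn)) //=.
have : 0 <= \sum_(i < n | i != Ordinal wn) F i by apply: sumr_ge0 => i _; apply: h.
lra.
Qed.

Lemma ex3 n (Y : nat -> nat -> nat -> int) :
  \sum_(0 <= l < n) \sum_(0 <= c < n) \sum_(0 <= c' < n) Y l c c' =
  \sum_(0 <= c < n) \sum_(0 <= c' < n) \sum_(0 <= l < n) Y l c c'.
Proof.
rewrite exchange_big; apply: eq_bigr => c _; exact: exchange_big.
Qed.

Lemma pow4sum n (g : nat -> int) :
  \sum_(0 <= i < n) \sum_(0 <= j < n) \sum_(0 <= k < n) \sum_(0 <= l < n) g i * g j * g k * g l
  = (\sum_(0 <= i < n) g i) ^+ 4.
Proof.
set s := \sum_(0 <= i < n) g i.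
under eq_bigr => i _ do under eq_bigr => j _ do under eq_bigr => k _ do rewrite -mulr_sumr.
under eq_bigr => i _ do under eq_bigr => j _ do rewrite -mulr_suml -mulr_sumr.
under eq_bigr => i _ do rewrite -mulr_suml -mulr_suml -mulr_sumr.
rewrite -!mulr_suml; rewrite -/s.
by rewrite !exprS expr0 mulr1 !mulrA.
Qed.

Lemma sum_delta n c : (c < n)%N ->
  \sum_(0 <= c' < n) ((n * (c == c'))%:R) ^+ 4 = (n%:R) ^+ 4 :> int.
Proof.
move=> cn; rewrite big_mkord (bigD1 (Ordinal cn)) //= eqxx muln1 big1 ?addr0 //.
move=> c' ne; suff -> : (c == c') = false by rewrite muln0 expr0n.
by apply/eqP => e; move/eqP: ne; apply; apply: val_inj; rewrite /= e.
Qed.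

Lemma sumS2 n G : (forall x y, (x < n)%N -> (y < n)%N -> G x y = G y x) ->
  (forall x x', (x < n)%N -> (x' < n)%N ->
     \sum_(0 <= y < n) G x y * G x' y = (n * (x == x'))%:R) ->
  \sum_(0 <= i < n) \sum_(0 <= j < n) \sum_(0 <= k < n) \sum_(0 <= l < n)
     (\sum_(0 <= c < n) P4 G i j k l c) ^+ 2 = (n ^ 5)%:R.
Proof.
move=> hsym horth.
have PP i j k l c c' : P4 G i j k l c * P4 G i j k l c' =
   (G i c * G i c') * (G j c * G j c') * (G k c * G k c') * (G l c * G l c').
  by rewrite /P4; ring.
under eq_bigr => i _ do under eq_bigr => j _ do under eq_bigr => k _ do
  under eq_bigr => l _ do (rewrite expr2 mulr_suml;
    under eq_bigr => c _ do (rewrite mulr_sumr; under eq_bigr => c' _ do rewrite PP)).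
under eq_bigr => i _ do under eq_bigr => j _ do under eq_bigr => k _ do rewrite ex3.
under eq_bigr => i _ do under eq_bigr => j _ do rewrite ex3.
under eq_bigr => i _ do rewrite ex3.
rewrite ex3.
under eq_bigr => c _ do under eq_bigr => c' _ do rewrite (pow4sum n (fun x => G x c * G x c')).
rewrite big_nat_cond.
under eq_bigr => c /andP[/andP[_ cn] _].
  rewrite big_nat_cond.
  under eq_bigr => c' /andP[/andP[_ c'n] _].
    rewrite big_nat_cond.
    under eq_bigr => x /andP[/andP[_ xn] _] do rewrite (hsym x c) // (hsym x c') //.
    rewrite -big_nat_cond horth //.
  over.
  rewrite -big_nat_cond sum_delta //.
over.
rewrite -big_nat_cond sumr_const_nat subn0.
by rewrite -natrX -mulrnA -expnSr.
Qed.

Lemma sum_lt n (F G : nat -> int) w : (forall i, (i < n)%N -> F i <= G i) -> (w < n)%N ->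
  F w < G w -> \sum_(0 <= i < n) F i < \sum_(0 <= i < n) G i.
Proof.
move=> h wn lt; rewrite -subr_gt0 -sumrB; apply: (sum_pos (w := w)) => //.
  by move=> i /h; rewrite subr_ge0.
by rewrite subr_gt0.
Qed.

Lemma cst_le n G i j k l : (forall x y, pm1 (G x y)) -> (0 < n)%N ->
  (cstN n G i j k l)%:R * (n ^ 2)%:R <= (\sum_(0 <= c < n) P4 G i j k l c) ^+ 2.
Proof.
move=> hpm n0; case E: (cstN n G i j k l); last by rewrite mul0r sqr_ge0.
have P0 c : (c < n)%N -> P4 G i j k l c = P4 G i j k l 0%N.
  move=> cn; have := forallP (forallP E (Ordinal cn)) (Ordinal n0).
  by move/eqP.
rewrite big_nat_cond.
under eq_bigr => c /andP[/andP[_ cn] _] do rewrite P0 //.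
rewrite -big_nat_cond sumr_const_nat subn0 mul1r.
have : pm1 (P4 G i j k l 0%N) by rewrite /P4; do ! apply: pm1M.
by case=> ->; rewrite ?mulNrn ?sqrrN natrX.
Qed.

Lemma cnt_lt n G i0 j0 k0 l0 : (0 < n)%N -> (forall x y, pm1 (G x y)) ->
  (forall x y, (x < n)%N -> (y < n)%N -> G x y = G y x) ->
  (forall x x', (x < n)%N -> (x' < n)%N ->
     \sum_(0 <= y < n) G x y * G x' y = (n * (x == x'))%:R) ->
  (i0 < n)%N -> (j0 < n)%N -> (k0 < n)%N -> (l0 < n)%N ->
  cstN n G i0 j0 k0 l0 = false -> \sum_(0 <= c < n) P4 G i0 j0 k0 l0 c != 0 ->
  cntN n G * (n ^ 2)%:R < (n ^ 5)%:R.
Proof.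
move=> n0 hpm hs ho hi hj hk hl E S0.
rewrite -(sumS2 hs ho) /cntN mulr_suml.
under eq_bigr => i _ do rewrite mulr_suml.
under eq_bigr => i _ do under eq_bigr => j _ do rewrite mulr_suml.
under eq_bigr => i _ do under eq_bigr => j _ do under eq_bigr => k _ do rewrite mulr_suml.
apply: (sum_lt (w := i0)) => //.
  move=> i _; do 3 (apply: ler_sum_nat => ? _); exact: cst_le.
apply: (sum_lt (w := j0)) => //.
  move=> i _; do 2 (apply: ler_sum_nat => ? _); exact: cst_le.
apply: (sum_lt (w := k0)) => //.
  move=> i _; do 1 (apply: ler_sum_nat => ? _); exact: cst_le.
apply: (sum_lt (w := l0)) => //.
  move=> i _; exact: cst_le.
by rewrite E mul0r lt0r sqrf_eq0 S0 sqr_ge0.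
Qed.

Lemma all_iota n (P : nat -> bool) : all P (iota 0 n) -> forall x, (x < n)%N -> P x.
Proof. by move=> /allP h x xn; apply: h; rewrite mem_iota. Qed.

Definition sumf n (F : nat -> int) := foldr (fun y a => F y + a) 0 (iota 0 n).
Lemma sum_foldr n (F : nat -> int) : \sum_(0 <= y < n) F y = sumf n F.
Proof.
rewrite /index_iota subn0 /sumf; elim: (iota 0 n) => [|x s IH]; by rewrite ?big_nil ?big_cons ?IH.
Qed.

Lemma eq_sumf n (F F' : nat -> int) : F =1 F' -> sumf n F = sumf n F'.
Proof. by move=> e; rewrite /sumf; elim: (iota 0 n) => //= x s ->; rewrite e. Qed.

Lemma forall_all n (P : nat -> bool) : [forall c : 'I_n, P c] = all P (iota 0 n).
Proof.
apply/forallP/allP => [h x | h c]; last by apply: h; rewrite mem_iota /=.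
by rewrite mem_iota /= => xn; exact: (h (Ordinal xn)).
Qed.

Definition cstC n G i j k l : bool :=
  all (fun c => all (fun c' => P4 G i j k l c == P4 G i j k l c') (iota 0 n)) (iota 0 n).
Lemma cstN_C n G i j k l : cstN n G i j k l = cstC n G i j k l.
Proof.
rewrite /cstN /cstC -forall_all; apply: eq_forallb => c.
by rewrite -forall_all.
Qed.

Definition cntC n G : int :=
  sumf n (fun i => sumf n (fun j => sumf n (fun k => sumf n (fun l => (cstC n G i j k l)%:R)))).
Lemma cntN_C n G : cntN n G = cntC n G.
Proof.
rewrite /cntN /cntC sum_foldr; apply: eq_sumf => i.
rewrite sum_foldr; apply: eq_sumf => j.
rewrite sum_foldr; apply: eq_sumf => k.
rewrite sum_foldr; apply: eq_sumf => l.
by rewrite cstN_C.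
Qed.

Definition A4 (x y : nat) : int := if x == y then -1 else 1.

Lemma cntA : cntN 4 A4 = 64.
Proof. rewrite cntN_C; vm_compute; reflexivity. Qed.

Definition Lt : seq (seq nat) :=
  [:: [:: 0; 4; 2; 6; 7; 5; 1; 3]; [:: 4; 0; 7; 3; 2; 1; 6; 5];
      [:: 2; 7; 0; 5; 6; 4; 3; 1]; [:: 6; 3; 5; 0; 1; 2; 4; 7];
      [:: 7; 2; 6; 1; 0; 3; 5; 4]; [:: 5; 1; 4; 2; 3; 0; 7; 6];
      [:: 1; 6; 3; 4; 5; 7; 0; 2]; [:: 3; 5; 1; 7; 4; 6; 2; 0]]%N.
Definition sy (r x : nat) : bool :=
  xorb (xorb (odd r && odd x) (odd (r %/ 2) && odd (x %/ 2))) (odd (r %/ 4) && odd (x %/ 4)).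
Definition sgnb (b : bool) : int := if b then -1 else 1.
Definition B64 (X Y : nat) : int :=
  let r := nth 0%N (nth [::] Lt (X %/ 8)) (Y %/ 8) in
  sgnb (xorb (sy r (X %% 8)) (sy r (Y %% 8))).

Lemma B_symC : all (fun x => all (fun y => B64 x y == B64 y x) (iota 0 64)) (iota 0 64).
Proof. vm_compute; reflexivity. Qed.
Lemma B_diagC : all (fun x => B64 x x == B64 0 0) (iota 0 64).
Proof. vm_compute; reflexivity. Qed.
Lemma B_rowC : all (fun x => sumf 64 (B64 x) == sumf 64 (B64 0)) (iota 0 64).
Proof. vm_compute; reflexivity. Qed.
Lemma B_orthC : all (fun x => all (fun x' =>
   sumf 64 (fun y => B64 x y * B64 x' y) == (64 * (x == x'))%:R) (iota 0 64)) (iota 0 64).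
Proof. vm_compute; reflexivity. Qed.
Lemma B_witC : (cstC 64 B64 0 1 32 34 == false) && (sumf 64 (P4 B64 0 1 32 34) == -32).
Proof. vm_compute; reflexivity. Qed.

Lemma pm_sgnb b : pm1 (sgnb b).
Proof. by case: b; [right|left]. Qed.

Lemma goodB : good (64%N, B64).
Proof.
constructor => //=.
- by move=> x y; apply: pm_sgnb.
- by move=> x y xn yn; apply/eqP; move: y yn; apply: all_iota (all_iota B_symC xn).
- by move=> x xn; apply/eqP; apply: (all_iota B_diagC xn).
- by move=> x xn; rewrite !sum_foldr; apply/eqP; apply: (all_iota B_rowC xn).
- move=> x x' xn x'n; rewrite sum_foldr; apply/eqP.
  by move: x' x'n; apply: all_iota (all_iota B_orthC xn).
Qed.

Lemma A_rowC : all (fun x => sumf 4 (A4 x) == sumf 4 (A4 0)) (iota 0 4).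
Proof. vm_compute; reflexivity. Qed.
Lemma A_orthC : all (fun x => all (fun x' =>
   sumf 4 (fun y => A4 x y * A4 x' y) == (4 * (x == x'))%:R) (iota 0 4)) (iota 0 4).
Proof. vm_compute; reflexivity. Qed.

Lemma goodA : good (4%N, A4).
Proof.
constructor => //=.
- by move=> x y; rewrite /A4; case: (x == y); [right|left].
- by move=> x y _ _; rewrite /A4 eq_sym.
- by move=> x _; rewrite /A4 !eqxx.
- by move=> x xn; rewrite !sum_foldr; apply/eqP; apply: (all_iota A_rowC xn).
- move=> x x' xn x'n; rewrite sum_foldr; apply/eqP.
  by move: x' x'n; apply: all_iota (all_iota A_orthC xn).
Qed.

Lemma cntN_pos n G : (0 < n)%N -> (forall x y, pm1 (G x y)) -> 0 < cntN n G.
Proof.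
move=> n0 hpm; rewrite /cntN.
have nn i j k l : 0 <= (cstN n G i j k l)%:R :> int by [].
apply: (sum_pos (w := 0%N)) => // [i _|]; first by do 3 (apply: sumr_ge0 => ? _).
apply: (sum_pos (w := 0%N)) => // [i _|]; first by do 2 (apply: sumr_ge0 => ? _).
apply: (sum_pos (w := 0%N)) => // [i _|]; first by do 1 (apply: sumr_ge0 => ? _).
apply: (sum_pos (w := 0%N)) => //.
suff -> : cstN n G 0 0 0 0 by [].
apply/forallP => c; apply/forallP => c'; apply/eqP.
have h x : x * x * x * x = 1 :> int -> True by [].
by rewrite /P4; case: (hpm 0%N c) => ->; case: (hpm 0%N c') => ->.
Qed.

Lemma cntB_lt : cntN 64 B64 < (64 ^ 3)%:R.
Proof.
have := B_witC => /andP[/eqP w1 /eqP w2].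
have := @cnt_lt 64 B64 0 1 32 34 isT (g_pm goodB) (g_sym goodB) (g_orth goodB) isT isT isT isT.
rewrite -cstN_C in w1; rewrite w1 sum_foldr w2 => /(_ erefl isT) h.
rewrite -(ltr_pM2r (x := (64 ^ 2)%:R)); last by rewrite ltr0n expn_gt0.
have e : (3 + 2 = 5)%N by [].
by rewrite -natrM -expnD e.
Qed.

Lemma ordl_cat l1 l2 : ordl (l1 ++ l2) = (ordl l1 * ordl l2)%N.
Proof. by elim: l1 => [|b l IH] /=; rewrite ?mul1n // IH mulnA. Qed.
Lemma ordl_nseq m b : ordl (nseq m b) = (b.1 ^ m)%N.
Proof. by elim: m => //= m ->; rewrite expnS. Qed.
Lemma allg_cat l1 l2 : allg l1 -> allg l2 -> allg (l1 ++ l2).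
Proof. by elim: l1 => //= b l IH [gb gl] g2; split => //; apply: IH. Qed.
Lemma allg_nseq m b : good b -> allg (nseq m b).
Proof. by move=> gb; elim: m. Qed.
Lemma prod_nseq m b (F : base -> int) : \prod_(x <- nseq m b) F x = F b ^+ m.
Proof. by rewrite big_nseq; elim: m => //= m ->; rewrite exprS. Qed.

Definition lst N k : seq base := nseq k (64%N, B64) ++ nseq (3 * (N - k)) (4%N, A4).

Lemma allg_lst N k : allg (lst N k).
Proof. apply: allg_cat; apply: allg_nseq; [exact: goodB | exact: goodA]. Qed.

Lemma ordl_lst N k : (k <= N)%N -> ordl (lst N k) = (4 ^ (3 * N))%N.
Proof.
move=> kN; rewrite ordl_cat !ordl_nseq /=.
have -> : 64%N = (4 ^ 3)%N by [].
by rewrite -expnM -expnD -mulnDr subnKC.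
Qed.

Lemma cnt_lst N k : (k <= N)%N ->
  cntN (4 ^ (3 * N)) (Kr (lst N k)) = cntN 64 B64 ^+ k * 64 ^+ (3 * (N - k)).
Proof.
move=> kN; rewrite -(ordl_lst kN) Kr_cnt ?allg_lst //.
  by rewrite big_cat /= !prod_nseq /= cntA.
exact: allg_lst.
Qed.

Lemma f_decr (b : int) N k k' : 0 < b -> b < (64 ^ 3)%:R -> (k < k')%N -> (k' <= N)%N ->
  b ^+ k' * 64 ^+ (3 * (N - k')) < b ^+ k * 64 ^+ (3 * (N - k)).
Proof.
move=> b0 bl kk k'N.
have ek : k' = (k + (k' - k))%N by lia.
have ee : (N - k = (N - k') + (k' - k))%N by lia.
have d0 : (k' - k)%N != 0%N by lia.
rewrite ee {1}ek; move: (k' - k)%N d0 => d d0.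
rewrite !exprM !exprD.
set Y := (64 ^+ 3) ^+ (N - k').
have X0 : 0 < b ^+ k * Y by rewrite mulr_gt0 ?exprn_gt0.
have -> : b ^+ k * b ^+ d * Y = (b ^+ k * Y) * b ^+ d by rewrite mulrAC.
have -> : b ^+ k * (Y * (64 ^+ 3) ^+ d) = (b ^+ k * Y) * (64 ^+ 3) ^+ d by rewrite mulrA.
have bl' : b < 64 ^+ 3 by move: bl; rewrite natrX.
by rewrite (ltr_pM2l X0) (ltrXn2r _ (Order.POrderTheory.ltW b0) bl').
Qed.

Theorem mainTheorem7 :
  forall N : nat, exists (m : nat) (Hs : 'I_N -> 'M[int]_(4 ^ m)),
    (forall k, hadamard (Hs k) /\ graphical (Hs k) /\ regular (Hs k)) /\
    (forall k l, k != l -> ~ hadamard_equiv (Hs k) (Hs l)).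
Proof.
move=> N; exists (3 * N)%N.
exists (fun k : 'I_N => \matrix_(i < 4 ^ (3 * N), c < 4 ^ (3 * N)) Kr (lst N k) i c).
split.
  move=> k; have kN : (k <= N)%N by apply: ltnW.
  have gl := allg_lst N k; have E := ordl_lst kN.
  split; [split|split].
  - by move=> i j; rewrite mxE; apply: Kr_pm.
  - apply/matrixP => i j; rewrite !mxE.
    under eq_bigr => c _ do rewrite !mxE.
    have h := @Kr_orth (lst N k) i j gl; rewrite E in h.
    rewrite -(big_mkord xpredT (fun c => Kr (lst N k) i c * Kr (lst N k) j c)) h //.
    by rewrite natrM mulr_natr.
  - split; first by apply/matrixP => i j; rewrite !mxE; apply: Kr_sym.
    by move=> i j; rewrite !mxE Kr_diag // [RHS]Kr_diag.
  - have h := @Kr_row (lst N k); rewrite E in h.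
    exists (\sum_(0 <= c < 4 ^ (3 * N)) Kr (lst N k) 0 c); split => i.
      under eq_bigr => c _ do rewrite mxE.
      by rewrite -(big_mkord xpredT (fun c => Kr (lst N k) i c)) h.
    under eq_bigr => c _ do rewrite mxE Kr_sym //.
    by rewrite -(big_mkord xpredT (fun c => Kr (lst N k) i c)) h.
move=> k l ne heq.
have := cntM_equiv heq; rewrite !cntM_mx.
rewrite (cnt_lst (ltnW (ltn_ord k))) (cnt_lst (ltnW (ltn_ord l))).
have b0 : 0 < cntN 64 B64 by exact: (@cntN_pos 64 B64 isT (fun x y => pm_sgnb _)).
case: (ltngtP k l) => [kl|lk|e].
- move=> e; have := f_decr b0 cntB_lt kl (ltnW (ltn_ord l)).
  by rewrite e Order.POrderTheory.ltxx.
- move=> e; have := f_decr b0 cntB_lt lk (ltnW (ltn_ord k)).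
  by rewrite e Order.POrderTheory.ltxx.
- by move=> _; move/eqP: ne; apply; apply: val_inj.
Qed.
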